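(* There is a sign $\epsilon = \pm 1$ such that the family $\epsilon\tilde{\alpha}_0 h', \dots, \epsilon\tilde{\alpha}_r h'$ is a uniform positive dual family to $\underline{a} = (au_0, \dots, au_r)$ in $L$. Therefore there exists a positive integer $l$ such that for all $0 \leq j \leq r$, $au_j(\epsilon\tilde{\alpha}_j h') = lt$ and $au_k(\epsilon\tilde{\alpha}_j h') = 0$ for $k \neq j$ (i.e. $\underline{a} \cdot (\epsilon\tilde{\underline{\alpha}} h') = lt I_{r+1}$). The value of $l$ is given by the following equality, which holds in $\mathbb{Z}$: $$\epsilon \lambda l t = \frac{\mathcal{N}(h')}{\mathcal{N}(L)} \tilde{\lambda} \tilde{t}.$$
   Context: Let $\mathbb{K}$ be a number field of degree $d = r+2 \geq 2$ with exactly one pair of complex embeddings, with embeddings ordered $\sigma_1, \dots, \sigma_r$ (real), $\sigma_{r+1}$ (complex) and $\sigma_{r+2} = \overline{\sigma_{r+1}}$. A $\mathbb{Q}$-basis $(e_1, \dots, e_d)$ of $\mathbb{K}$ is called positive if $i\cdot\det((\sigma_j(e_k))_{1 \leq j,k\leq d}) > 0$. Let $\mathfrak{f} \neq \mathcal{O}_{\mathbb{K}}$ be an integral ideal, $q\mathbb{Z} = \mathfrak{f} \cap \mathbb{Z}$, $\mathfrak{b}$ an integral ideal coprime to $\mathfrak{f}$, $L = \mathfrak{f}\mathfrak{b}^{-1}$, and $\mathfrak{a}$ an integral ideal coprime to $\mathfrak{f}\mathfrak{b}$ of norm $N$ with $\mathfrak{a}^{-1}L/L$ cyclic. Let $h \in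 L$ be admissible, i.e. $h/q \equiv 1 \bmod L$ and $h/N$ generates $\mathfrak{a}^{-1}L/L$. Write $h = mh'$ with $m$ a positive integer and $h'$ primitive in $L$. Let $u_1, \dots, u_r$ be totally positive units congruent to $1$ mod $\mathfrak{f}$ (obtained from a system of fundamental units of this group) such that $1, u_1, \dots, u_r$ are linearly independent; put $u_0 = 1$. Choose a positive $\mathbb{Z}$-basis $B_L = (e_0 = h', e_1, \dots, e_{r+1})$ of $L$ with $u_jh' = \sum_{k=0}^j c_{jk0}e_k$, $c_{jk0} \in \mathbb{Z}$, $c_{jj0} > 0$. Put $\lambda = \prod_{j=1}^r c_{jj0}$ and let $a \in \mathrm{Hom}_{\mathbb{Z}}(L, \mathbb{Z})$ be defined by $\lambda a = \det_{B_L}(h', u_1h', \dots, u_rh', \cdot)$; write $au_j$ for the linear form $x \mapsto a(u_jx)$. Let $\mathcal{A}$ be the square matrix of size $r+1$ of the coefficients of $au_0, \dots, au_r$ on the last $r+1$ vectors of the dual basis of $B_L$ (the first coefficients are all $0$), with Smith elementary divisors $[A_r, \dots, A_1, 1]$ ($A_i | A_{i+1}$), and put $t = A_r$. A positive dual family to $\underline{a}$ in $L$ is a family $\alpha_0, \dots, \alpha_r \in L$ with $au_j(\alpha_j) > 0$ and $au_k(\alpha_j) = 0$ for $k \neq j$; it is uniform if $au_j(\alpha_j)$ is independent of $j$. It is known (previous lemma) that for any uniform positive dual family $\alpha'$ with $au_j(\alpha'_j) = n$, $t$ divides $n$. Similarly, choose a positive basis $B_{\mathbb{K}} = (1, \tilde{e}_1,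 \dots, \tilde{e}_{r+1})$ of $\mathcal{O}_{\mathbb{K}}$ with $u_j = \sum_{k=0}^j \tilde{c}_{jk0}\tilde{e}_k$, $\tilde{c}_{jj0} > 0$; put $\tilde{\lambda} = \prod_{j=1}^r \tilde{c}_{jj0}$ and define $\tilde{a}$ by $\tilde{\lambda}\tilde{a} = \det_{B_{\mathbb{K}}}(1, u_1, \dots, u_r, \cdot)$. Let $\tilde{\mathcal{A}}$ be the analogous square matrix for $(\tilde{a}, \tilde{a}u_1, \dots, \tilde{a}u_r)$, with elementary divisors $[\tilde{A}_r, \dots, \tilde{A}_1, 1]$, and put $\tilde{t} = \tilde{A}_r$. Let $\tilde{\alpha}_0, \dots, \tilde{\alpha}_r \in \mathcal{O}_{\mathbb{K}}$ be given by the columns of $(\prod_{i=1}^r \tilde{A}_i^{-1})\mathrm{com}(\tilde{\mathcal{A}})^T$, so that $\tilde{a}u_j(\tilde{\alpha}_j) = \tilde{t}$ and $\tilde{a}u_k(\tilde{\alpha}_j) = 0$ for $k \neq j$. Here $\mathcal{N}(h')$ is the norm of the element $h'$ and $\mathcal{N}(L)$ the norm of the fractional ideal $L$. *)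

(* Defs.v *)
(* Number field K = finite field extension of Q (fieldExtType rat),
   complex embeddings into algC (algebraic closure of Q inside C). *)
From HB Require Import structures.
From mathcomp Require Import all_boot all_order all_algebra all_field.
Set Implicit Arguments. Unset Strict Implicit. Unset Printing Implicit Defensive.
Import Order.TTheory GRing.Theory Num.Theory.
Local Open Scope ring_scope.

Section NF.
Variable K : fieldExtType rat.

Definition OK (x : K) : Prop :=
  exists p : {poly int}, p \is monic /\ root (map_poly (fun z : int => (z%:~R : K)) p) x.

Definition OKunit (u : K) : Prop := OK u /\ OK u^-1.

Definition qfree n (e : 'I_n -> K) : Prop :=
  forall c : 'I_n -> rat, \sum_i c i *: e i = 0 -> forall i, c i = 0.
Definition zspan n (e : 'I_n -> K) (x : K) : Prop :=
  exists z : 'I_n -> int, x = \sum_i e i *~ z i.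
Definition zbasis n (I : K -> Prop) (e : 'I_n -> K) : Prop :=
  qfree e /\ forall x, I x <-> zspan e x.

Definition OKmodule (I : K -> Prop) : Prop :=
  I 0 /\ (forall x y, I x -> I y -> I (x - y)) /\ (forall c x, OK c -> I x -> I (c * x)).
Definition frac_ideal (I : K -> Prop) : Prop :=
  OKmodule I /\ (exists x, I x /\ x != 0) /\
  exists c, c != 0 /\ OK c /\ forall x, I x -> OK (c * x).
Definition int_ideal (I : K -> Prop) : Prop := frac_ideal I /\ forall x, I x -> OK x.
Definition idealMul (I J : K -> Prop) (x : K) : Prop :=
  exists n (a b : 'I_n -> K), (forall i, I (a i)) /\ (forall i, J (b i)) /\ x = \sum_i a i * b i.
Definition idealInv (I : K -> Prop) (x : K) : Prop := forall y, I y -> OK (x * y).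
Definition ideal_coprime (I J : K -> Prop) : Prop := exists x y, I x /\ J y /\ x + y = 1.

Definition detB n (B : 'I_n -> K) (v : 'I_n -> K) : rat :=
  \det (\matrix_(j < n, k < n) coord [tuple B i | i < n] k (v j)).

Definition ideal_norm_is n (I : K -> Prop) (v : rat) : Prop :=
  exists (eK eI : 'I_n -> K), zbasis OK eK /\ zbasis I eI /\ v = `|detB eK eI|.

(* the quotient J/I of Z-modules is cyclic, generated by (the class of) g *)
Definition quot_generated_by (J I : K -> Prop) (g : K) : Prop :=
  J g /\ forall x, J x -> exists z : int, I (x - g *~ z).

(* the linear form a defined by  lam * a(x) = det_B(h, u_1 h, ..., u_r h, x) *)
Definition dualform r (B : 'I_r.+2 -> K) (u : 'I_r.+1 -> K) (h : K) (lam : rat) (x : K) : rat :=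
  detB B (fun j : 'I_r.+2 => if (j < r.+1)%N then u (inord j) * h else x) / lam.

Definition coefmx r (F : 'I_r.+1 -> K -> rat) (B : 'I_r.+2 -> K) : 'M[rat]_r.+1 :=
  \matrix_(j, k) F j (B (lift ord0 k)).

Definition positive_basis n (sigma : 'I_n -> {rmorphism K -> algC}) (e : 'I_n -> K) : Prop :=
  0 < 'i * \det (\matrix_(j < n, k < n) sigma j (e k)).

Definition elt_norm n (sigma : 'I_n -> {rmorphism K -> algC}) (x : K) : algC :=
  \prod_i sigma i x.

Definition pos_dual_family n (F : 'I_n -> K -> rat) (I : K -> Prop) (al : 'I_n -> K) : Prop :=
  (forall j, I (al j)) /\ (forall j, 0 < F j (al j)) /\ (forall j k, k != j -> F k (al j) = 0).
Definition uniform_family n (F : 'I_n -> K -> rat) (al : 'I_n -> K) : Prop :=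
  forall j k, F j (al j) = F k (al k).
End NF.

Definition smith_divisors n (M : 'M[rat]_n.+1) (A : 'I_n.+1 -> int) : Prop :=
  A ord0 = 1 /\ (forall i, 0 <= A i) /\
  (forall i : 'I_n, (A (widen_ord (leqnSn n) i) %| A (lift ord0 i))%Z) /\
  exists P Q : 'M[int]_n.+1, P \in unitmx /\ Q \in unitmx /\
    map_mx (fun z : int => (z%:~R : rat)) P *m M *m map_mx (fun z : int => (z%:~R : rat)) Q
    = diag_mx (\row_i ((A i)%:~R : rat)).

(* Main.v *)
Require Import Defs.
From HB Require Import structures.
From mathcomp Require Import all_boot all_order all_algebra all_field.
From mathcomp Require Import ring.
Import Order.TTheory GRing.Theory Num.Theory.
Local Open Scope ring_scope.
Set Implicit Arguments. Unset Strict Implicit. Unset Printing Implicit Defensive.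

Section Gen.
Variable K : fieldExtType rat.
Variable n : nat.
Hypothesis hdim : \dim {:K} = n.

Definition Tup (e : 'I_n -> K) := [tuple e i | i < n].

Lemma nth_Tup (e : 'I_n -> K) (i : 'I_n) : (Tup e)`_i = e i.
Proof. by rewrite -tnth_nth tnth_mktuple. Qed.

Lemma qfree_free (e : 'I_n -> K) : qfree e -> free (Tup e).
Proof.
move=> he; apply/freeP => k hk i; apply: he.
by rewrite -[RHS]hk; apply: eq_bigr => j _; rewrite nth_Tup.
Qed.

Lemma qfree_span (e : 'I_n -> K) : qfree e -> <<Tup e>>%VS = fullv.
Proof.
move=> he; apply/eqP; rewrite eqEdim subvf /=.
by move: (qfree_free he); rewrite /free => /eqP ->; rewrite size_tuple hdim.
Qed.

Lemma qfree_expand (e : 'I_n -> K) v : qfree e ->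
  v = \sum_i coord (Tup e) i v *: e i.
Proof.
move=> he; rewrite {1}(@coord_span _ _ _ (Tup e) v); last by rewrite qfree_span // memvf.
by apply: eq_bigr => i _; rewrite nth_Tup.
Qed.

Lemma coord_uniq (e : 'I_n -> K) v c : qfree e ->
  v = \sum_i c i *: e i -> forall k, coord (Tup e) k v = c k.
Proof.
move=> he hv k; apply/eqP; rewrite -subr_eq0; apply/eqP.
apply: (he (fun i => coord (Tup e) i v - c i)).
under eq_bigr do rewrite scalerBl.
by rewrite sumrB -hv -qfree_expand // subrr.
Qed.

Lemma detB_comb (B v : 'I_n -> K) (C : 'M[rat]_n) : qfree B ->
  (forall k, v k = \sum_l C k l *: B l) -> detB B v = \det C.
Proof.
move=> hB hv; rewrite /detB; congr (\det _); apply/matrixP => j k.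
by rewrite mxE (coord_uniq hB (hv j)).
Qed.

Variable sigma : 'I_n -> {rmorphism K -> algC}.

Definition Sm (v : 'I_n -> K) : 'M[algC]_n := \matrix_(j, k) sigma j (v k).

Lemma sigmaZ j (c : rat) x : sigma j (c *: x) = ratr c * sigma j x.
Proof. by rewrite -mulr_algl rmorphM alg_num_field fmorph_rat. Qed.

Lemma Sm_comb (B v : 'I_n -> K) (C : 'M[rat]_n) :
  (forall k, v k = \sum_l C k l *: B l) ->
  \det (Sm v) = \det (Sm B) * ratr (\det C).
Proof.
move=> hv.
have -> : Sm v = Sm B *m (map_mx ratr C)^T.
  apply/matrixP => j k; rewrite !mxE hv rmorph_sum; apply: eq_bigr => l _.
  by rewrite sigmaZ !mxE mulrC.
by rewrite det_mulmx det_tr det_map_mx.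
Qed.

Lemma Sm_detB (B v : 'I_n -> K) : qfree B ->
  \det (Sm v) = \det (Sm B) * ratr (detB B v).
Proof.
move=> hB; apply: Sm_comb => k.
by rewrite (qfree_expand (v k) hB); apply: eq_bigr => l _; rewrite mxE.
Qed.

Lemma Sm_mul (h : K) (v : 'I_n -> K) :
  \det (Sm (fun k => h * v k)) = elt_norm sigma h * \det (Sm v).
Proof.
have -> : Sm (fun k => h * v k) = diag_mx (\row_j sigma j h) *m Sm v.
  by apply/matrixP => j k; rewrite mul_diag_mx !mxE rmorphM.
by rewrite det_mulmx det_diag /elt_norm; congr (_ * _); apply: eq_bigr => i _; rewrite mxE.
Qed.

Lemma Sm_eq (v v' : 'I_n -> K) : v =1 v' -> Sm v = Sm v'.
Proof. by move=> e; apply/matrixP => i j; rewrite !mxE e. Qed.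

Lemma zbasis_trans (I : K -> Prop) (B e : 'I_n -> K) : zbasis I B -> zbasis I e ->
  exists z : int, \det (Sm e) = \det (Sm B) * z%:~R.
Proof.
move=> [hBf hBs] [hef hes].
have : forall j, exists zj : 'I_n -> int, e j = \sum_i B i *~ zj i.
  move=> j; apply/hBs/hes; exists (fun i => (i == j)%:Z).
  rewrite (bigD1 j) //= eqxx mulr1z big1 ?addr0 // => i /negbTE ->.
  by rewrite mulr0z.
case/fin_all_exists => Z hZ.
exists (\det (\matrix_(j, l) Z j l)).
rewrite (@Sm_comb B e (map_mx (fun z : int => (z%:~R : rat)) (\matrix_(j, l) Z j l))).
  by rewrite det_map_mx ratr_int.
by move=> k; rewrite hZ; apply: eq_bigr => l _; rewrite !mxE scaler_int.
Qed.

End Gen.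
Section Lin.
Variable K : fieldExtType rat.
Variable r : nat.
Definition ext (a : 'I_r.+1 -> K) (x : K) : 'I_r.+2 -> K :=
  fun j => if (j < r.+1)%N then a (inord j) else x.

Lemma lift_max_lt (i : 'I_r.+1) : (lift ord_max i < r.+1)%N.
Proof. by rewrite lift_max /=. Qed.

Lemma detB_lin (B : 'I_r.+2 -> K) a x y (al be : rat) :
  detB B (ext a (al *: x + be *: y)) = al * detB B (ext a x) + be * detB B (ext a y).
Proof.
apply: (determinant_multilinear (i0 := ord_max)).
- apply/rowP => k; rewrite !mxE /ext /= ltnn.
  by rewrite linearD !linearZ.
- by apply/matrixP => i k; rewrite !mxE /ext lift_max_lt.
- by apply/matrixP => i k; rewrite !mxE /ext lift_max_lt.
Qed.

Lemma detB_ext0 (B : 'I_r.+2 -> K) a : detB B (ext a 0) = 0.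
Proof.
have := detB_lin B a 0 0 0 0.
by rewrite !scale0r addr0 !mul0r addr0.
Qed.

Lemma detB_rep (B : 'I_r.+2 -> K) a (k : 'I_r.+1) : detB B (ext a (a k)) = 0.
Proof.
apply: (determinant_alternate (i1 := widen_ord (leqnSn _) k) (i2 := ord_max)).
  by rewrite neq_ltn /= ltn_ord.
move=> l; rewrite !mxE /ext /= ltn_ord ltnn; congr (coord _ _ (a _)).
by apply: val_inj; rewrite /= inordK.
Qed.

Lemma detB_sum (B : 'I_r.+2 -> K) a I (s : seq I) (F : I -> K) :
  detB B (ext a (\sum_(i <- s) F i)) = \sum_(i <- s) detB B (ext a (F i)).
Proof.
apply: (big_morph (fun x => detB B (ext a x))); last exact: detB_ext0.
by move=> x y; have := detB_lin B a x y 1 1; rewrite !scale1r !mul1r.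
Qed.

Lemma detB_scale (B : 'I_r.+2 -> K) a x (c : rat) :
  detB B (ext a (c *: x)) = c * detB B (ext a x).
Proof.
have := detB_lin B a x 0 c 0; rewrite scale0r addr0 mul0r addr0 => ->.
by [].
Qed.

Lemma detB_ext_eq (B : 'I_r.+2 -> K) a a' z : a =1 a' -> detB B (ext a z) = detB B (ext a' z).
Proof. by move=> e; rewrite /detB; congr (\det _); apply/matrixP => i j; rewrite !mxE /ext e. Qed.

Hypothesis hdim : \dim {:K} = r.+2.

Lemma ker_span (B : 'I_r.+2 -> K) (u : 'I_r.+1 -> K) z : qfree B -> qfree u ->
  detB B (ext u z) = 0 -> exists c : 'I_r.+1 -> rat, z = \sum_i c i *: u i.
Proof.
move=> hB hu /eqP /det0P [v vn0 vC].
have hs : \sum_j v 0 j *: ext u z j = 0.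
  have -> : \sum_j v 0 j *: ext u z j = \sum_l (v *m \matrix_(j, k) coord (Tup B) k (ext u z j)) 0 l *: B l.
    under eq_bigr do rewrite (qfree_expand hdim (ext u z _) hB) scaler_sumr.
    rewrite exchange_big /=; apply: eq_bigr => l _; rewrite !mxE scaler_suml.
    by apply: eq_bigr => j _; rewrite scalerA mxE.
  by rewrite vC; apply: big1 => l _; rewrite mxE scale0r.
rewrite big_ord_recr /= /ext ltnn in hs.
have hw : forall i : 'I_r.+1, u (inord (widen_ord (leqnSn r.+1) i)) = u i.
  by move=> i; congr (u _); apply: val_inj; rewrite /= inordK.
case: (eqVneq (v 0 ord_max) 0) => hm.
  rewrite hm scale0r addr0 in hs.
  have h0 := hu (fun i => v 0 (widen_ord (leqnSn r.+1) i)).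
  have : forall i, v 0 (widen_ord (leqnSn r.+1) i) = 0.
    apply: h0; rewrite -[RHS]hs; apply: eq_bigr => i _; rewrite /= ?ltn_ord ?hw //. 
  move=> hz; case/eqP: vn0; apply/rowP => j; rewrite mxE.
  case: (ltnP j r.+1) => hj.
    by have := hz (Ordinal hj); rewrite /= => <-; congr (v _ _); apply: val_inj.
  have -> : j = ord_max by apply: val_inj; apply/eqP; rewrite eqn_leq hj -ltnS ltn_ord.
  by [].
exists (fun i => - (v 0 (widen_ord (leqnSn r.+1) i) / v 0 ord_max)).
have : v 0 ord_max *: z = - \sum_(i < r.+1) v 0 (widen_ord (leqnSn r.+1) i) *: u i.
  apply/eqP; rewrite -addr_eq0 addrC; apply/eqP; rewrite -[RHS]hs; congr (_ + _).
  by apply: eq_bigr => i _; rewrite /= ?ltn_ord ?hw.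
move=> e; apply: (scalerI hm); rewrite e scaler_sumr -sumrN; apply: eq_bigr => i _.
by rewrite scalerA mulrN scaleNr mulrC mulfVK.
Qed.

Lemma ker_nonzero (B : 'I_r.+2 -> K) (u : 'I_r.+1 -> K) : qfree B -> qfree u ->
  exists w, detB B (ext u w) != 0.
Proof.
move=> hB hu.
case: (boolP [exists l, detB B (ext u (B l)) != 0]).
  by case/existsP => l hl; exists (B l).
rewrite negb_exists => /forallP hall.
have : forall l, exists c : 'I_r.+1 -> rat, B l = \sum_i c i *: u i.
  move=> l; apply: (ker_span (B := B)) => //; move: (hall l); rewrite negbK; move/eqP. done.
case/fin_all_exists => C hC.
pose Cm : 'M[rat]_(r.+2, r.+1) := \matrix_(l, i) C l i.
pose U : 'M[rat]_(r.+1, r.+2) := \matrix_(i, m) coord (Tup B) m (u i).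
have e : 1%:M = Cm *m U.
  apply/matrixP => l m.
  have hCl : B l = \sum_k (\sum_i C l i * coord (Tup B) k (u i)) *: B k.
    rewrite [LHS]hC; under eq_bigr do rewrite (qfree_expand hdim (u _) hB) scaler_sumr.
    rewrite exchange_big; apply: eq_bigr => k _; rewrite scaler_suml.
    by apply: eq_bigr => i _; rewrite scalerA.
  have := coord_uniq hdim hB hCl m; rewrite -{1}(nth_Tup B l) coord_free; last exact: qfree_free.
  by rewrite !mxE => ->; apply: eq_bigr => i _; rewrite !mxE.
have := mxrankM_maxl Cm U; rewrite -e mxrank1 => h.
have := rank_leq_col Cm; move: h; rewrite leqNgt => /negP h1 h2.
by case: h1; apply: leq_ltn_trans h2 _.
Qed.

Lemma forms_indep (B : 'I_r.+2 -> K) (u : 'I_r.+1 -> K) : qfree B -> qfree u -> B ord0 = 1 ->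
  forall y : 'I_r.+1 -> rat,
  (forall k, detB B (ext u (u k * \sum_i y i *: B (lift ord0 i))) = 0) -> forall i, y i = 0.
Proof.
move=> hB hu hB0 y hk.
case: (boolP [forall i, y i == 0]) => [/forallP h i|]; first exact/eqP.
rewrite negb_forall => /existsP [i0 hi0]; exfalso.
set x := \sum_i y i *: B (lift ord0 i) in hk.
have hxnq : forall c : rat, x != c%:A.
  move=> c; apply/eqP => e.
  have := hB (fun l => if unlift ord0 l is Some i then y i else - c).
  rewrite big_ord_recl unlift_none.
  under eq_bigr do rewrite liftK.
  rewrite -/x e hB0 scaleNr addrC subrr => /(_ erefl (lift ord0 i0)).
  by rewrite liftK => /eqP; rewrite (negbTE hi0).
have [w hw] := ker_nonzero hB hu.
pose phi z := detB B (ext u z).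
have phiL : forall a b p q, phi (a *: p + b *: q) = a * phi p + b * phi q.
  by move=> a b p q; rewrite /phi detB_lin.
have phiK : forall z, phi z = 0 -> phi (x * z) = 0.
  move=> z /(ker_span hB hu) [c ->]; rewrite mulr_sumr /phi detB_sum.
  apply: big1 => i _; rewrite -scalerAr mulrC detB_scale.
  by rewrite [detB _ _]hk mulr0.
pose c := phi (x * w) / phi w.
have hpsi : forall z, phi (x * z) = c * phi z.
  move=> z; pose a := phi z / phi w.
  have hz0 : phi (1 *: z + (- a) *: w) = 0.
    by rewrite phiL mul1r mulNr /a divfK // subrr.
  have := phiK _ hz0.
  rewrite mulrDr -!scalerAr phiL mul1r mulNr => /eqP; rewrite subr_eq0 => /eqP ->.
  by rewrite /a /c mulrAC [RHS]mulrAC [phi z * _]mulrC.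
have hxc : x - c%:A != 0 by rewrite subr_eq0 hxnq.
pose y0 := (x - c%:A)^-1 * w.
have e1 : x * y0 - c *: y0 = w.
  by rewrite -mulr_algl -mulrBl /y0 mulrA divff // mul1r.
have : phi (1 *: (x * y0) + (- c) *: y0) = 0 by rewrite phiL hpsi mul1r mulNr subrr.
rewrite scale1r scaleNr e1 => h0.
by move: hw; rewrite -/(phi w) h0 eqxx.
Qed.
End Lin.

Unset Implicit Arguments.

Theorem lemma13
  (K : fieldExtType rat) (r : nat) (hdim : \dim {:K} = r.+2)
  (* ordered embeddings: sigma_0..sigma_(r-1) real, sigma_r complex, sigma_(r+1) = conj sigma_r *)
  (sigma : 'I_r.+2 -> {rmorphism K -> algC})
  (hsig_inj : forall i j, (forall x, sigma i x = sigma j x) -> i = j)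
  (hsig_real : forall i : 'I_r.+2, (i < r)%N -> forall x, sigma i x \is Num.real)
  (hsig_cplx : exists x, sigma (inord r) x \isn't Num.real)
  (hsig_conj : forall x, sigma ord_max x = (sigma (inord r) x)^*)
  (* the ideals f, b, L = f b^-1, a *)
  (f b a L : K -> Prop) (q N m : nat) (h h' : K)
  (hf : int_ideal f) (hfne : exists x, OK x /\ ~ f x)
  (hq : (0 < q)%N /\ forall z : int, f (z%:~R) <-> (q%:Z %| z)%Z)
  (hb : int_ideal b) (hfb : ideal_coprime f b)
  (hL : forall x, L x <-> idealMul f (idealInv b) x)
  (ha : int_ideal a) (hafb : ideal_coprime a (idealMul f b))
  (hN : @ideal_norm_is K r.+2 a N%:R)
  (hcyc : exists g, quot_generated_by (idealMul (idealInv a) L) L g)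
  (* h admissible, h = m h' with h' primitive *)
  (hhL : L h) (hhq : L (h / q%:R - 1))
  (hhN : quot_generated_by (idealMul (idealInv a) L) L (h / N%:R))
  (hm : (0 < m)%N) (hhm : h = h' *+ m)
  (hprim : L h' /\ forall (k : nat) y, (1 < k)%N -> L y -> h' != y *+ k)
  (* units u_0 = 1, u_1, ..., u_r *)
  (u : 'I_r.+1 -> K) (hu0 : u ord0 = 1)
  (hu : forall j, j != ord0 ->
     [/\ OKunit (u j), (forall i : 'I_r.+2, (i < r)%N -> 0 < sigma i (u j)) & f (u j - 1)])
  (hufund : forall k : 'I_r.+1 -> int,
     \prod_(j < r.+1 | j != ord0) u j ^ k j = 1 -> forall j, j != ord0 -> k j = 0)
  (hufree : qfree u)
  (* positive Z-basis B_L of L *)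
  (BL : 'I_r.+2 -> K) (hBL : zbasis L BL) (hBLpos : positive_basis sigma BL)
  (hBL0 : BL ord0 = h')
  (c : 'I_r.+1 -> 'I_r.+2 -> int)
  (hc : forall j : 'I_r.+1, u j * h' = \sum_(k < r.+2 | (k <= j)%N) BL k *~ c j k)
  (hcpos : forall j : 'I_r.+1, 0 < c j (widen_ord (leqnSn _) j))
  (A : 'I_r.+1 -> int)
  (* positive Z-basis B_K of O_K *)
  (BK : 'I_r.+2 -> K) (hBK : zbasis (@OK K) BK) (hBKpos : positive_basis sigma BK)
  (hBK0 : BK ord0 = 1)
  (ct : 'I_r.+1 -> 'I_r.+2 -> int)
  (hct : forall j : 'I_r.+1, u j = \sum_(k < r.+2 | (k <= j)%N) BK k *~ ct j k)
  (hctpos : forall j : 'I_r.+1, 0 < ct j (widen_ord (leqnSn _) j))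
  (At : 'I_r.+1 -> int)
  (alt : 'I_r.+1 -> K)
  (NL : rat) (hNL : @ideal_norm_is K r.+2 L NL) :
  let lam : int := \prod_(j < r.+1 | j != ord0) c j (widen_ord (leqnSn _) j) in
  let aU : 'I_r.+1 -> K -> rat := fun j x => dualform BL u h' lam%:~R (u j * x) in
  let t : int := A ord_max in
  let lamt : int := \prod_(j < r.+1 | j != ord0) ct j (widen_ord (leqnSn _) j) in
  let atU : 'I_r.+1 -> K -> rat := fun j x => dualform BK u 1 lamt%:~R (u j * x) in
  let tt : int := At ord_max in
  smith_divisors (coefmx aU BL) A ->
  smith_divisors (coefmx atU BK) At ->
  (forall j, OK (alt j)) ->
  (forall j k, atU k (alt j) = if k == j then tt%:~R else 0) ->
  exists eps : int, (eps = 1 \/ eps = -1) /\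
    let al : 'I_r.+1 -> K := fun j => (alt j * h') *~ eps in
    [/\ pos_dual_family aU L al, uniform_family aU al &
     exists l : int, 0 < l /\
       (forall j k, aU k (al j) = if k == j then (l * t)%:~R else 0) /\
       ((eps * lam * l * t)%:~R : algC)
         = elt_norm sigma h' / ratr NL * lamt%:~R * tt%:~R].
Proof.
move=> lam aU t lamt atU tt hsA hsAt hOK halt.
have hBLf : qfree BL := hBL.1.
have hBKf : qfree BK := hBK.1.
have SmBLp : 0 < 'i * \det (Sm sigma BL) := hBLpos.
have SmBKp : 0 < 'i * \det (Sm sigma BK) := hBKpos.
have SmBL0 : \det (Sm sigma BL) != 0.
  by move: SmBLp; apply: contraTneq => ->; rewrite mulr0 ltxx.
have SmBK0 : \det (Sm sigma BK) != 0.
  by move: SmBKp; apply: contraTneq => ->; rewrite mulr0 ltxx.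
pose D := \det (Sm sigma BL) / \det (Sm sigma BK).
have hDpos : 0 < D.
  have -> : D = ('i * \det (Sm sigma BL)) / ('i * \det (Sm sigma BK)).
    by rewrite -mulf_div divff ?mul1r // neq0Ci.
  exact: divr_gt0.
have hD : ratr (detB BK BL) = D.
  by rewrite /D (Sm_detB hdim sigma BL hBKf) [_ * ratr _]mulrC mulfK.
have hNLD : ratr NL = D.
  case: hNL => eK [eI [heK [heI ->]]].
  have [zK hzK] := zbasis_trans sigma hBK heK.
  have [wK hwK] := zbasis_trans sigma heK hBK.
  have [zI hzI] := zbasis_trans sigma hBL heI.
  have [wI hwI] := zbasis_trans sigma heI hBL.
  have unit1 : forall (X : algC) (z w : int), X != 0 -> X = X * z%:~R * w%:~R ->
      `|(z%:~R : algC)| = 1.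
    move=> X z w hX e.
    have hzw : (z * w)%:~R = (1 : algC).
      by apply: (mulfI hX); rewrite intrM mulrA -e mulr1.
    have hzw' : z * w = 1 by apply: (@intr_inj algC); rewrite hzw.
    have : w * z = 1 by rewrite mulrC.
    move/intUnitRing.unitzPl; rewrite qualifE /= => /orP [] /eqP ->.
      by rewrite normr1.
    by rewrite normrN normr1.
  have hK1 : `|(zK%:~R : algC)| = 1.
    by apply: (unit1 (\det (Sm sigma BK)) zK wK) => //; rewrite -hzK -hwK.
  have hI1 : `|(zI%:~R : algC)| = 1.
    by apply: (unit1 (\det (Sm sigma BL)) zI wI) => //; rewrite -hzI -hwI.
  have hK0 : \det (Sm sigma eK) != 0.
    by rewrite hzK mulf_neq0 // -normr_eq0 hK1 oner_neq0.
  rewrite ratr_norm.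
  have e := Sm_detB hdim sigma eI heK.1.
  have -> : ratr (detB eK eI) = \det (Sm sigma eI) / \det (Sm sigma eK).
    by rewrite e [_ * ratr _]mulrC mulfK.
  rewrite hzI hzK normf_div !normrM hK1 hI1 !mulr1 -normf_div -/D gtr0_norm //.
have hh'0 : h' != 0.
  have hL0 : L 0.
    by apply/hBL.2; exists (fun=> 0); rewrite big1 // => i _; rewrite mulr0z.
  by have := hprim.2 2%N 0 erefl hL0; rewrite mul0rn.
pose Nh := elt_norm sigma h'.
have hNh0 : Nh != 0.
  by rewrite /Nh /elt_norm; apply/prodf_neq0 => i _; rewrite fmorph_eq0.
have hlam : 0 < lam by apply: prodr_gt0 => j _; exact: hcpos.
have hlamt : 0 < lamt by apply: prodr_gt0 => j _; exact: hctpos.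
have hlam0 : (lam%:~R : algC) != 0 by rewrite intr_eq0 gt_eqF.
have hlamt0 : (lamt%:~R : algC) != 0 by rewrite intr_eq0 gt_eqF.
have hD0 : D != 0 by rewrite gt_eqF.
pose K0 : algC := Nh * lamt%:~R / (D * lam%:~R).
have E1 : forall k x, aU k x = detB BL (ext (fun i => u i * h') (u k * x)) / lam%:~R.
  by [].
have E2 : forall k x, atU k x = detB BK (ext u (u k * x)) / lamt%:~R.
  by move=> k x; rewrite /atU /dualform -/(ext _ _) (detB_ext_eq _ _ (a := fun i => u i * 1) (a' := u)) // => i; rewrite mulr1.
have ratrMi : forall (z : int) (x : rat), ratr ((z%:~R : rat) * x) = (z%:~R : algC) * ratr x.
  by move=> z x; rewrite rmorphM rmorph_int.
have ratrDi : forall (x : rat) (z : int), ratr (x / (z%:~R : rat)) = ratr x / (z%:~R : algC).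
  by move=> x z; rewrite fmorph_div rmorph_int.
have RL : forall v, ratr (detB BL v) = \det (Sm sigma v) / \det (Sm sigma BL).
  by move=> v; rewrite (Sm_detB hdim sigma v hBLf) [_ * ratr _]mulrC mulfK.
have RK : forall v, \det (Sm sigma v) = \det (Sm sigma BK) * ratr (detB BK v).
  by move=> v; rewrite (Sm_detB hdim sigma v hBKf).
have haU : forall (e : int) j k,
    ratr (aU k ((alt j * h') *~ e)) = e%:~R * K0 * ratr (atU k (alt j)).
  move=> e j k; rewrite E1 E2 !ratrDi RL.
  rewrite (Sm_eq sigma (v' := fun i => h' * ext u ((e%:~R : rat) *: (u k * alt j)) i)); last first.
    move=> i; rewrite /ext; case: ifP => _; first by rewrite mulrC.
    by rewrite scaler_int !mulrzAr [h' * _]mulrC -mulrA.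
  rewrite Sm_mul RK detB_scale ratrMi -/Nh /K0 /D.
  by field; rewrite ?SmBL0 ?SmBK0 ?hlam0 ?hlamt0.
have htt : tt != 0.
  apply/negP => /eqP htt0.
  case: hsAt => _ [_ [_ [P [Q [hP [hQ hPQ]]]]]].
  pose y := fun i : 'I_r.+1 => ((Q i ord_max)%:~R : rat).
  have hMQ : coefmx atU BK *m map_mx (fun z : int => (z%:~R : rat)) Q
      = map_mx (fun z : int => (z%:~R : rat)) (invmx P) *m diag_mx (\row_i ((At i)%:~R : rat)).
    rewrite -hPQ !mulmxA -map_mxM mulVmx // map_mx1 mul1mx.
    by [].
  have hy : forall k, detB BK (ext u (u k * \sum_i y i *: BK (lift ord0 i))) = 0.
    move=> k; rewrite mulr_sumr detB_sum.
    have := congr1 (fun M : 'M[rat]_r.+1 => M k ord_max) hMQ.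
    have htt1 : At ord_max = 0 := htt0.
    rewrite mul_mx_diag !mxE htt1 mulr0 => h0.
    have -> : \sum_i detB BK (ext u (u k * (y i *: BK (lift ord0 i))))
        = lamt%:~R * \sum_i coefmx atU BK k i * (Q i ord_max)%:~R.
      rewrite mulr_sumr; apply: eq_bigr => i _.
      rewrite -scalerAr detB_scale /coefmx mxE E2 /y [RHS]mulrA [lamt%:~R * _]mulrC divfK; first by rewrite mulrC.
      by rewrite intr_eq0 (gt_eqF hlamt).
    have h0' : \sum_i coefmx atU BK k i * (Q i ord_max)%:~R = 0.
      by rewrite -[RHS]h0; apply: eq_bigr => i _; rewrite [X in _ = _ * X]mxE.
    by rewrite h0' mulr0.
  have hy0 := forms_indep hdim hBKf hufree hBK0 hy.
  have := congr1 (fun M : 'M[int]_r.+1 => M ord_max ord_max) (mulVmx hQ).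
  rewrite !mxE eqxx big1 // => i _.
  by have := hy0 i; rewrite /y => /eqP; rewrite intr_eq0 => /eqP ->; rewrite mulr0.
have hK00 : K0 != 0.
  apply: mulf_neq0; first exact: mulf_neq0.
  by rewrite invr_neq0 //; exact: mulf_neq0.
pose q0 := aU ord0 ((alt ord0 * h') *~ 1).
have hq0 : ratr q0 = K0 * tt%:~R.
  by rewrite /q0 haU halt eqxx ratr_int mulr1z mul1r.
have hq00 : q0 != 0.
  apply/negP => /eqP h0; move: hq0; rewrite h0 rmorph0 => /esym /eqP.
  by rewrite mulf_eq0 (negbTE hK00) intr_eq0 (negbTE htt).
pose eps : int := if 0 < q0 then 1 else -1.
have heps : eps = 1 \/ eps = -1 by rewrite /eps; case: ifP; [left | right].
pose n := (eps%:~R : rat) * q0.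
have hn : 0 < n.
  rewrite /n /eps; case: ifP => hqp; first by rewrite mul1r.
  rewrite mulN1r oppr_gt0 lt_neqAle hq00 /=.
  by move/negbT: hqp; rewrite -leNgt.
have hal : forall j k, aU k ((alt j * h') *~ eps) = if k == j then n else 0.
  move=> j k; apply: (@fmorph_inj _ algC ratr).
  change (ratr (aU k ((alt j * h') *~ eps)) = ratr (if k == j then n else 0) :> algC).
  rewrite haU halt; case: eqP => _.
    by rewrite ratr_int /n ratrMi hq0 mulrA.
  by rewrite rmorph0 mulr0.
have hLmul : forall c x, OK c -> L x -> L (c * x).
  move=> c0 x hc0 /hL [n' [a' [b' [ha' [hb' ->]]]]]; apply/hL.
  exists n', (fun i => c0 * a' i), b'; split; first by move=> i; apply: hf.1.1.2.2.
  by split => //; rewrite mulr_sumr; apply: eq_bigr => i _; rewrite mulrA.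
have hLz : forall x (e : int), L x -> L (x *~ e).
  move=> x e /hBL.2 [z ->]; apply/hBL.2; exists (fun i => z i * e).
  by rewrite mulrz_suml; apply: eq_bigr => i _; rewrite mulrzA.
have hLal : forall j, L ((alt j * h') *~ eps).
  by move=> j; apply: hLz; apply: hLmul => //; exact: hprim.1.
have : forall j, exists z : 'I_r.+2 -> int, (alt j * h') *~ eps = \sum_i BL i *~ z i.
  by move=> j; apply/hBL.2.
case/fin_all_exists => Z hZ.
have haUBL : forall k j, aU k ((alt j * h') *~ eps)
    = \sum_(i < r.+1) aU k (BL (lift ord0 i)) * (Z j (lift ord0 i))%:~R.
  move=> k j; rewrite E1 hZ mulr_sumr detB_sum mulr_suml big_ord_recl.
  have hrep : detB BL (ext (fun i => u i * h') (u k * h')) = 0 :=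
    detB_rep BL (fun i => u i * h') k.
  rewrite mulrzAr -scaler_int detB_scale hBL0 hrep mulr0 mul0r add0r.
  apply: eq_bigr => i _; rewrite E1 mulrzAr -scaler_int detB_scale.
  by rewrite -mulrA mulrC.
pose mI m1 m2 (M : 'M[int]_(m1, m2)) := map_mx (fun z : int => (z%:~R : rat)) M.
pose Zm : 'M[int]_r.+1 := \matrix_(i, j) Z j (lift ord0 i).
have hMZ : coefmx aU BL *m mI _ _ Zm = n%:M.
  apply/matrixP => k j.
  transitivity (aU k ((alt j * h') *~ eps)).
    by rewrite haUBL !mxE; apply: eq_bigr => i _; rewrite !mxE.
  by rewrite hal !mxE; case: eqP.
case: hsA => _ [hAge [_ [P [Q [hP [hQ hPQ]]]]]].
pose W := invmx Q *m Zm *m invmx P.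
have hDW : diag_mx (\row_i ((A i)%:~R : rat)) *m mI _ _ W = n%:M.
  rewrite -hPQ /mI !map_mxM !mulmxA.
  rewrite -[_ *m map_mx _ Q *m map_mx _ (invmx Q)]mulmxA -map_mxM mulmxV // map_mx1 mulmx1.
  rewrite -[_ *m coefmx aU BL *m _]mulmxA.
  rewrite -/(mI _ _ Zm) hMZ mul_mx_scalar -scalemxAl -map_mxM mulmxV // map_mx1 scalemx1.
  by [].
pose l := W ord_max ord_max.
have hnl : n = ((t * l)%:~R : rat).
  have := congr1 (fun M : 'M[rat]_r.+1 => M ord_max ord_max) hDW.
  by rewrite mul_diag_mx mxE /mI [in X in _ * X = _]mxE [in X in X * _ = _]mxE [in X in _ = X]mxE eqxx mulr1n intrM => <-.
have ht0 : 0 <= t := hAge ord_max.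
have htl : 0 < t * l by rewrite -(ltr0z rat) -hnl.
have htpos : 0 < t.
  rewrite lt_def ht0 andbT; apply/eqP => ht; move: htl; rewrite ht mul0r ltxx.
  by [].
have hlpos : 0 < l by rewrite -(pmulr_rgt0 _ htpos).
exists eps; split => //.
rewrite /=.
split.
- split; first exact: hLal.
  split; first by move=> j; rewrite hal eqxx.
  by move=> j k hkj; rewrite hal (negbTE hkj).
- by move=> j k; rewrite !hal !eqxx.
exists l; split => //; split.
  by move=> j k; rewrite hal hnl mulrC.
have hlt : ((l * t)%:~R : algC) = eps%:~R * (K0 * tt%:~R).
  by rewrite mulrC -ratr_int -hnl /n ratrMi hq0.
rewrite -!mulrA intrM [(lam * _)%:~R]intrM hlt hNLD /K0.
rewrite -/Nh; move: hD0 hlam0 hlamt0; clearbody Nh D; move=> hD0 hlam0 hlamt0.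
by case: heps => ->; rewrite ?mulr1z ?mulrN1z; field; rewrite hD0 hlam0.
Qed.
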